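(* Let $\mathcal{C}$ be a full abstract family of languages that is closed under reversal. Let $N$ and $Q$ be finitely generated groups, each admitting a $\mathcal{C}$-left-order. Then the (restricted, standard) wreath product $N\wr Q=\left(\bigoplus_{q\in Q}N\right)\rtimes Q$ admits a $\mathcal{C}$-left-order. In particular, the class of finitely generated groups admitting a left-order whose positive cone is the image of a regular language is closed under wreath products.
   Context: A full abstract family of languages is a class of formal languages closed under monoid homomorphisms, inverse monoid homomorphisms, intersection with regular languages, unions, concatenation and Kleene closure. The reversal of $\mathcal{L}\subseteq X^*$ is $\{x_n\cdots x_1 : x_1\cdots x_n\in\mathcal{L}\}$. A left-order on a group $H$ is a total order invariant under left multiplication; its positive cone is $P=\{h: 1\prec h\}$. For a finitely generated group $H$ and class $\mathcal{C}$, a left-order is a $\mathcal{C}$-left-order if there exist a finite set $X$, a surjective monoid homomorphism $\pi\colon X^*\to H$ and a language $\mathcal{L}\subseteq X^*$ in $\mathcal{C}$ with $\pi(\mathcal{L})$ equal to the positive cone. In $N\wr Q$, $Q$ acts on $\bigoplus_{q\in Q}N$ by shifting indices: $q'(n_q)_{q}q'^{-1}=(n_{q'q})_q$. *)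

(* Defs.v *)
From mathcomp Require Import all_boot.
From Stdlib Require List.
From Stdlib Require Import FunctionalExtensionality ProofIrrelevance.

Set Implicit Arguments.
Unset Strict Implicit.
Unset Printing Implicit Defensive.

Record group : Type := Group {
  gcar :> Type;
  gmul : gcar -> gcar -> gcar;
  gone : gcar;
  ginv : gcar -> gcar;
  gmulA : forall x y z, gmul x (gmul y z) = gmul (gmul x y) z;
  gmul1l : forall x, gmul gone x = x;
  gmul1r : forall x, gmul x gone = x;
  gmulVl : forall x, gmul (ginv x) x = gone;
  gmulVr : forall x, gmul x (ginv x) = gone }.

Arguments gone {_}.

Section GroupFacts.
Variable G : group.

Lemma ginv_uniq (x y : G) : gmul x y = gone -> y = ginv x.
Proof.
move=> h; rewrite -(gmul1l y) -(gmulVl x) -gmulA h gmul1r //.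
Qed.

Lemma ginv1 : ginv (@gone G) = gone.
Proof. by symmetry; apply: ginv_uniq; rewrite gmul1l. Qed.

Lemma ginvK (x : G) : ginv (ginv x) = x.
Proof. by symmetry; apply: ginv_uniq; rewrite gmulVl. Qed.

Lemma ginvM (x y : G) : ginv (gmul x y) = gmul (ginv y) (ginv x).
Proof.
symmetry; apply: ginv_uniq.
by rewrite -gmulA (gmulA y) gmulVr gmul1l gmulVr.
Qed.

Lemma gmulKV (a x : G) : gmul a (gmul (ginv a) x) = x.
Proof. by rewrite gmulA gmulVr gmul1l. Qed.

Lemma gmulVK (a x : G) : gmul (ginv a) (gmul a x) = x.
Proof. by rewrite gmulA gmulVl gmul1l. Qed.
End GroupFacts.

(* Evaluation of a word [w] over the alphabet [X] in [H], along the map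
   [g : X -> H]: this is the monoid homomorphism [X^* -> H] extending [g]
   (every monoid homomorphism from the free monoid [X^*] is of this form). *)
Definition eval_word (X : Type) (H : group) (g : X -> H) (w : seq X) : H :=
  foldr (fun x acc => gmul (g x) acc) gone w.

(* [H] is finitely generated (as a group): some finite family generates [H]
   as a group, i.e. every element is a product of generators and their
   inverses (the boolean marks an inverted letter). *)
Definition finitely_generated (H : group) : Prop :=
  exists (X : finType) (g : X -> H),
    forall h : H, exists w : seq (X * bool),
      h = eval_word (fun xb : X * bool => if xb.2 then ginv (g xb.1) else g xb.1) w.

Definition left_order (H : group) (lt : H -> H -> Prop) : Prop :=
  [/\ (forall x, ~ lt x x),
      (forall x y z, lt x y -> lt y z -> lt x z),
      (forall x y, x = y \/ lt x y \/ lt y x) &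
      (forall g x y, lt x y -> lt (gmul g x) (gmul g y))].

Definition positive_cone (H : group) (lt : H -> H -> Prop) : H -> Prop :=
  fun h => lt gone h.

Definition language (X : finType) := seq X -> Prop.

Definition lang_class := forall X : finType, language X -> Prop.

Definition hom_image (X Y : finType) (h : X -> seq Y) (L : language X)
  : language Y :=
  fun v => exists w, L w /\ v = flatten (map h w).

Definition hom_preimage (X Y : finType) (h : X -> seq Y) (L : language Y)
  : language X :=
  fun w => L (flatten (map h w)).

Definition lang_inter (X : finType) (L1 L2 : language X) : language X :=
  fun w => L1 w /\ L2 w.

Definition lang_union (X : finType) (L1 L2 : language X) : language X :=
  fun w => L1 w \/ L2 w.

Definition lang_concat (X : finType) (L1 L2 : language X) : language X :=
  fun w => exists u v, [/\ L1 u, L2 v & w = u ++ v].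

Definition lang_star (X : finType) (L : language X) : language X :=
  fun w => exists ws : seq (seq X), (forall u, u \in ws -> L u) /\ w = flatten ws.

Definition lang_rev (X : finType) (L : language X) : language X :=
  fun w => L (rev w).

Definition regular : lang_class :=
  fun X L => exists (S : finType) (s0 : S) (d : S -> X -> S) (F : pred S),
    forall w, L w <-> F (foldl d s0 w).

Definition full_AFL (C : lang_class) : Prop :=
  (forall (X Y : finType) (h : X -> seq Y) (L : language X),
      C X L -> C Y (hom_image h L)) /\
  (forall (X Y : finType) (h : X -> seq Y) (L : language Y),
      C Y L -> C X (hom_preimage h L)) /\
  (forall (X : finType) (L R : language X),
      C X L -> regular R -> C X (lang_inter L R)) /\
  (forall (X : finType) (L1 L2 : language X),
      C X L1 -> C X L2 -> C X (lang_union L1 L2)) /\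
  (forall (X : finType) (L1 L2 : language X),
      C X L1 -> C X L2 -> C X (lang_concat L1 L2)) /\
  (forall (X : finType) (L : language X), C X L -> C X (lang_star L)).

Definition closed_under_reversal (C : lang_class) : Prop :=
  forall (X : finType) (L : language X), C X L -> C X (lang_rev L).

Definition C_left_order (C : lang_class) (H : group) (lt : H -> H -> Prop)
  : Prop :=
  left_order lt /\
  exists (X : finType) (g : X -> H) (L : language X),
    [/\ C X L,
        (forall h : H, exists w, eval_word g w = h) &
        (forall h : H, positive_cone lt h <-> exists w, L w /\ eval_word g w = h)].

Definition admits_C_left_order (C : lang_class) (H : group) : Prop :=
  exists lt : H -> H -> Prop, C_left_order C lt.

Section Wreath.
Variables N Q : group.

Definition fin_supp (f : Q -> N) : Prop :=
  exists s : list Q, forall q, ~ List.In q s -> f q = gone.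

Definition dsum := {f : Q -> N | fin_supp f}.

Lemma dsum_eq (f g : dsum) : (forall q, proj1_sig f q = proj1_sig g q) -> f = g.
Proof.
case: f g => [f fP] [g gP] /= e.
have efg : f = g by apply: functional_extensionality.
subst g; by rewrite (proof_irrelevance _ fP gP).
Qed.

(* Q acts on ⊕N by shifting indices: (a·f)(x) = f(a^-1 x). *)
Lemma shift_mul_supp (f g : dsum) (a : Q) :
  fin_supp (fun x => gmul (proj1_sig f x) (proj1_sig g (gmul (ginv a) x))).
Proof.
case: f g => [f [s fs]] [g [s' gs]] /=.
exists (s ++ List.map (gmul a) s') => x nx.
rewrite fs ?gs ?gmul1l //.
- move=> ix; apply: nx; apply: List.in_or_app; right.
  by rewrite -(gmulKV a x); apply: List.in_map.
- by move=> ix; apply: nx; apply: List.in_or_app; left.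
Qed.

Lemma one_supp : fin_supp (fun _ : Q => (@gone N)).
Proof. by exists nil. Qed.

Lemma inv_supp (f : dsum) (a : Q) :
  fin_supp (fun x => ginv (proj1_sig f (gmul a x))).
Proof.
case: f => [f [s fs]] /=.
exists (List.map (gmul (ginv a)) s) => x nx.
rewrite fs ?ginv1 // => ix; apply: nx.
by rewrite -(gmulVK a x); apply: List.in_map.
Qed.

Definition wcar := (dsum * Q)%type.

Definition wmul (u v : wcar) : wcar :=
  (exist _ _ (shift_mul_supp u.1 v.1 u.2), gmul u.2 v.2).

Definition wone : wcar := (exist _ _ one_supp, gone).

Definition winv (u : wcar) : wcar :=
  (exist _ _ (inv_supp u.1 u.2), ginv u.2).

Lemma wmulA (x y z : wcar) : wmul x (wmul y z) = wmul (wmul x y) z.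
Proof.
case: x y z => [f a] [g b] [h c]; rewrite /wmul /=; congr pair; last first.
  by rewrite gmulA.
apply: dsum_eq => q /=.
by rewrite ginvM gmulA gmulA.
Qed.

Lemma wmul1l (x : wcar) : wmul wone x = x.
Proof.
case: x => [f a]; rewrite /wmul /=; congr pair; last by rewrite gmul1l.
by apply: dsum_eq => q /=; rewrite ginv1 !gmul1l.
Qed.

Lemma wmul1r (x : wcar) : wmul x wone = x.
Proof.
case: x => [f a]; rewrite /wmul /=; congr pair; last by rewrite gmul1r.
by apply: dsum_eq => q /=; rewrite gmul1r.
Qed.

Lemma wmulVl (x : wcar) : wmul (winv x) x = wone.
Proof.
case: x => [f a]; rewrite /wmul /=; congr pair; last by rewrite gmulVl.
by apply: dsum_eq => q /=; rewrite ginvK gmulVl.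
Qed.

Lemma wmulVr (x : wcar) : wmul x (winv x) = wone.
Proof.
case: x => [f a]; rewrite /wmul /=; congr pair; last by rewrite gmulVr.
by apply: dsum_eq => q /=; rewrite gmulKV gmulVr.
Qed.

Definition wreath : group :=
  Group wmulA wmul1l wmul1r wmulVl wmulVr.
End Wreath.

(* Main.v *)
Require Import Defs.
From mathcomp Require Import all_boot.
From Stdlib Require Import FunctionalExtensionality PropExtensionality Classical ClassicalEpsilon.
From Stdlib Require List.
From Stdlib Require Import Lia.
Set Implicit Arguments.
Unset Strict Implicit.
Unset Printing Implicit Defensive.

Record enfa (X : finType) := ENFA {
  est : finType; einit : pred est; efin : pred est;
  etr : est -> option X -> est -> bool }.
Arguments est {X} e : rename.
Arguments einit {X} e _ : rename.
Arguments efin {X} e _ : rename.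
Arguments etr {X} e _ _ _ : rename.

Inductive epath (X : finType) (A : enfa X) (t : est A) : est A -> seq X -> Prop :=
| p_nil : @epath X A t t [::]
| p_eps s m w : etr A s None m -> @epath X A t m w -> @epath X A t s w
| p_step s m x w : etr A s (Some x) m -> @epath X A t m w -> @epath X A t s (x :: w).

Arguments epath {X} A t _ _.
Arguments p_nil {X A t}.
Arguments p_eps {X A t s m w}.
Arguments p_step {X A t s m x w}.

Definition elang X (A : enfa X) : language X :=
  fun w => exists s t, [/\ einit A s, efin A t & epath A t s w].

Section Paths.
Variables (X : finType) (A : enfa X).

Lemma path_cat (s m t : est A) u v :
  epath A m s u -> epath A t m v -> epath A t s (u ++ v).
Proof.
elim=> [//|s' m' w e _ IH|s' m' x w e _ IH] h.
- exact: p_eps e (IH h).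
- exact: p_step e (IH h).
Qed.

Definition erel : rel (est A) := fun u v => etr A u None v.

Lemma conn_path (u v t : est A) w : connect erel u v -> epath A t v w -> epath A t u w.
Proof.
move=> /connectP [p hp ev]; subst v.
elim: p u hp => [|y p IH] u /= hp h; first by [].
case/andP: hp => e hp; apply: p_eps e _; exact: IH y hp h.
Qed.

Lemma path_nil (s t : est A) : epath A t s [::] -> connect erel s t.
Proof.
move e: [::] => w h; elim: h e => [|s' m w' ed _ IH|]//.
move=> e; apply: connect_trans (connect1 _) (IH e); exact: ed.
Qed.

Lemma path_inv (s t : est A) x w : epath A t s (x :: w) ->
  exists u m, [/\ connect erel s u, etr A u (Some x) m & epath A t m w].
Proof.
move e: (x :: w) => l h; elim: h x w e => [//|s' m w' ed _ IH|s' m x' w' ed hp _] x w e.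
- have [u [m' [c e2 p]]] := IH _ _ e.
  exists u, m'; split=> //; apply: connect_trans (connect1 _) c; exact: ed.
- case: e => -> ->; exists s', m; split=> //; exact: connect0.
Qed.

Definition ecl (B : {set est A}) : {set est A} :=
  [set t | [exists s in B, connect erel s t]].
Definition dstep (B : {set est A}) (x : X) : {set est A} :=
  ecl [set t | [exists s in B, etr A s (Some x) t]].

Lemma dstep_spec w : forall (B : {set est A}) t,
  t \in foldl dstep (ecl B) w <-> exists s, s \in B /\ epath A t s w.
Proof.
elim: w => [|x w IH] B t /=.
  rewrite inE; split.
    case/existsP=> s /andP [sB c]; exists s; split=> //.
    by apply: conn_path c p_nil.
  by case=> s [sB p]; apply/existsP; exists s; rewrite sB (path_nil p).
have -> : dstep (ecl B) x = ecl [set t | [exists s in ecl B, etr A s (Some x) t]] by [].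
rewrite IH; split.
  case=> m [/[!inE] /existsP [u /andP [/[!inE] /existsP [s /andP [sB c]] e]] p].
  exists s; split=> //; apply: conn_path c _; exact: p_step e p.
case=> s [sB /path_inv [u [m [c e p]]]]; exists m; split=> //.
rewrite inE; apply/existsP; exists u; rewrite e andbT inE.
by apply/existsP; exists s; rewrite sB c.
Qed.
End Paths.

Lemma regular_ext X (L L' : language X) : (forall w, L w <-> L' w) -> regular L -> regular L'.
Proof.
move=> h [S [s0 [d [F hF]]]]; exists S, s0, d, F => w; rewrite -h; exact: hF.
Qed.

Lemma elang_regular X (A : enfa X) : regular (elang A).
Proof.
exists {set est A}, (ecl [set s | einit A s]), (@dstep _ A),
  (fun B : {set est A} => [exists t in B, efin A t]) => w; split.
  case=> s [t [i f p]]; apply/existsP; exists t; rewrite f andbT dstep_spec.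
  by exists s; rewrite inE.
case/existsP=> t /andP [/dstep_spec [s [/[!inE] i p]] f]; by exists s, t.
Qed.

Definition dfa_enfa (X : finType) (S : finType) (s0 : S) (d : S -> X -> S) (F : pred S) : enfa X :=
  @ENFA X S (pred1 s0) F (fun s o t => if o is Some x then t == d s x else false).

Lemma regular_enfa X (L : language X) : regular L -> exists A : enfa X, forall w, L w <-> elang A w.
Proof.
case=> S [s0 [d [F hF]]]; exists (dfa_enfa s0 d F) => w; rewrite hF; split.
  move=> h; exists s0, (foldl d s0 w); split=> //=.
  have aux : forall s, epath (dfa_enfa s0 d F) (foldl d s w) s w.
    elim: (w) => [|x w' IH] s /=; first exact: p_nil.
    apply: p_step (IH _); exact: eqxx.
  exact: aux.
case=> s [t [/= /eqP -> f p]].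
suff <- : t = foldl d s0 w by [].
elim: p => //= s' m x w' /eqP -> _ -> //.
Qed.

Lemma path_map X (A B : enfa X) (f : est A -> est B) :
  (forall s o t, etr A s o t -> etr B (f s) o (f t)) ->
  forall s t w, epath A t s w -> epath B (f t) (f s) w.
Proof.
move=> hf s t w; elim=> [|s' m w' e _ IH|s' m x w' e _ IH].
- exact: p_nil.
- exact: p_eps (hf _ _ _ e) IH.
- exact: p_step (hf _ _ _ e) IH.
Qed.

Definition union_enfa X (A B : enfa X) : enfa X :=
  @ENFA X (est A + est B)%type
    (fun s => match s with inl a => einit A a | inr b => einit B b end)
    (fun s => match s with inl a => efin A a | inr b => efin B b end)
    (fun s o t => match s, t with
                  | inl a, inl a' => etr A a o a'
                  | inr b, inr b' => etr B b o b'
                  | _, _ => false end).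

Lemma union_path X (A B : enfa X) t s w : epath (union_enfa A B) t s w ->
  match s, t with
  | inl a, inl a' => epath A a' a w
  | inr b, inr b' => epath B b' b w
  | _, _ => False end.
Proof.
elim=> [|[a|b] [m|m] w' //= e _ IH|[a|b] [m|m] x w' //= e _ IH].
- by case: t => ? ; exact: p_nil.
- by case: t IH => // ? IH; exact: p_eps e IH.
- by case: t IH => // ? IH; exact: p_eps e IH.
- by case: t IH => // ? IH; exact: p_step e IH.
- by case: t IH => // ? IH; exact: p_step e IH.
Qed.

Lemma reg_union X (L1 L2 : language X) :
  regular L1 -> regular L2 -> regular (lang_union L1 L2).
Proof.
move=> /regular_enfa [A hA] /regular_enfa [B hB].
apply: (regular_ext _ (elang_regular (union_enfa A B))) => w; split.
  case=> [[s|s]] [[t|t]] [/= i f /union_path p] //.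
    by left; apply/hA; exists s, t.
  by right; apply/hB; exists s, t.
case=> [/hA [s [t [i f p]]]|/hB [s [t [i f p]]]].
  exists (inl s), (inl t); split=> //; exact: (path_map (f:=inl) (B:=union_enfa A B)) p.
exists (inr s), (inr t); split=> //; exact: (path_map (f:=inr) (B:=union_enfa A B)) p.
Qed.

Definition cat_enfa X (A B : enfa X) : enfa X :=
  @ENFA X (est A + est B)%type
    (fun s => match s with inl a => einit A a | inr b => false end)
    (fun s => match s with inl a => false | inr b => efin B b end)
    (fun s o t => match s, t with
                  | inl a, inl a' => etr A a o a'
                  | inr b, inr b' => etr B b o b'
                  | inl a, inr b => [&& o == None, efin A a & einit B b]
                  | inr _, inl _ => false end).

Lemma cat_path X (A B : enfa X) b s w : epath (cat_enfa A B) (inr b) s w ->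
  match s with
  | inl a => exists u v a' b0, [/\ w = u ++ v, epath A a' a u, efin A a',
                                   einit B b0 & epath B b b0 v]
  | inr b1 => epath B b b1 w end.
Proof.
elim=> [|[a|b1] [m|m] w' //= e _ IH|[a|b1] [m|m] x w' //= e _ IH].
- exact: p_nil.
- case: IH => u [v [a' [b0 [-> p f i q]]]]; exists u, v, a', b0; split=> //.
  exact: p_eps e p.
- case/andP: e => f i; exists [::], w', a, m; split=> //; exact: p_nil.
- exact: p_eps e IH.
- case: IH => u [v [a' [b0 [-> p f i q]]]]; exists (x :: u), v, a', b0; split=> //.
  exact: p_step e p.
- exact: p_step e IH.
Qed.

Lemma reg_concat X (L1 L2 : language X) :
  regular L1 -> regular L2 -> regular (lang_concat L1 L2).
Proof.
move=> /regular_enfa [A hA] /regular_enfa [B hB].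
apply: (regular_ext _ (elang_regular (cat_enfa A B))) => w; split.
  case=> [[s|s]] [[t|t]] [//= i f /cat_path [u [v [a' [b0 [-> p f' i' q]]]]]].
  exists u, v; split=> //; [apply/hA; exists s, a' | apply/hB; exists b0, t]; by [].
case=> u [v [/hA [s [a' [i f p]]] /hB [b0 [t [i' f' q]]] ->]].
exists (inl s), (inr t); split=> //.
apply: (path_cat (A := cat_enfa A B) (m := inl a')).
  exact: (path_map (f:=inl) (B:=cat_enfa A B)) p.
apply: (p_eps (A := cat_enfa A B) (m := inr b0)); first by rewrite /= f i'.
exact: (path_map (f:=inr) (B:=cat_enfa A B)) q.
Qed.

Definition star_enfa X (A : enfa X) : enfa X :=
  @ENFA X (option (est A)) (pred1 None) (pred1 None)
    (fun s o t => match s, t with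
                  | Some a, Some a' => etr A a o a'
                  | None, Some a => (o == None) && einit A a
                  | Some a, None => (o == None) && efin A a
                  | None, None => false end).

Lemma star_path X (A : enfa X) s w : epath (star_enfa A) None s w ->
  match s with
  | None => lang_star (elang A) w
  | Some a => exists u r a', [/\ w = u ++ r, epath A a' a u, efin A a'
                                 & lang_star (elang A) r] end.
Proof.
elim=> [|[a|] [m|] w' //= e _ IH|[a|] [m|] x w' //= e _ IH].
- by exists [::].
- case: IH => u [r [a' [-> p f st]]]; exists u, r, a'; split=> //; exact: p_eps e p.
- exists [::], w', a; split=> //; exact: p_nil.
- case: IH => u [r [a' [-> p f [ws [hws ->]]]]].
  exists (u :: ws); split=> //.
  move=> u'; rewrite inE => /orP [/eqP ->|]; last exact: hws.
  by exists m, a'.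
- case: IH => u [r [a' [-> p f st]]]; exists (x :: u), r, a'; split=> //; exact: p_step e p.
Qed.

Lemma reg_star X (L : language X) : regular L -> regular (lang_star L).
Proof.
move=> /regular_enfa [A hA].
have hs : forall w, lang_star L w <-> lang_star (elang A) w.
  move=> w; split; case=> ws [h ->]; exists ws; split=> // u /h; by rewrite hA.
apply: (regular_ext _ (elang_regular (star_enfa A))) => w; rewrite hs; split.
  by case=> [[s|]] [[t|]] [//= i f /star_path].
case=> ws [hws ->]; exists None, None; split=> //.
elim: ws hws => [|u ws IH] hws /=; first exact: p_nil.
have [a0 [a' [i f p]]] := hws u (mem_head _ _).
apply: (p_eps (A := star_enfa A) (m := Some a0)); first by rewrite /= i.
apply: (path_cat (A := star_enfa A) (m := Some a')).
  exact: (path_map (f:=Some) (B:=star_enfa A)) p.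
apply: (p_eps (A := star_enfa A) (m := None)); first by rewrite /= f.
by apply: IH => u' hu; apply: hws; rewrite inE hu orbT.
Qed.

Definition rename_lang (X Y : finType) (phi : X -> Y) (L : language X) : language Y :=
  hom_image (fun x => [:: phi x]) L.

Lemma flatten_map1 (X Y : Type) (phi : X -> Y) w :
  flatten (map (fun x => [:: phi x]) w) = map phi w.
Proof. by elim: w => //= x w ->. Qed.

Definition ren_enfa (X Y : finType) (phi : X -> Y) (A : enfa X) : enfa Y :=
  @ENFA Y (est A) (einit A) (efin A)
    (fun s o t => match o with
                  | None => etr A s None t
                  | Some y => [exists x, (phi x == y) && etr A s (Some x) t] end).

Lemma reg_rename (X Y : finType) (phi : X -> Y) (L : language X) :
  regular L -> regular (rename_lang phi L).
Proof.
move=> /regular_enfa [A hA].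
apply: (regular_ext _ (elang_regular (ren_enfa phi A))) => v; split.
  case=> s [t [i f p]].
  have [w [-> q]] : exists w, v = map phi w /\ epath A t s w.
    elim: p {i} => [|s' m w' e _ [w [-> q]]|s' m y w' /existsP [x /andP [/eqP <- e]] _ [w [-> q]]].
    - by exists [::]; split=> //; exact: p_nil.
    - by exists w; split=> //; exact: (p_eps (A := A) (s := s') (m := m) e q).
    - by exists (x :: w); split=> //; exact: p_step e q.
  by exists w; rewrite flatten_map1; split=> //; apply/hA; exists s, t.
case=> w [/hA [s [t [i f p]]] ->]; rewrite flatten_map1; exists s, t; split=> //.
elim: p {i} => [|s' m w' e _ IH|s' m x w' e _ IH] /=.
- exact: p_nil.
- exact: (p_eps (A := ren_enfa phi A) (s := s') (m := m) e IH).
- apply: (p_step (A := ren_enfa phi A) (s := s') (m := m)) IH; apply/existsP; exists x; by rewrite eqxx e.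
Qed.

Definition rev_enfa X (A : enfa X) : enfa X :=
  @ENFA X (est A) (efin A) (einit A) (fun s o t => etr A t o s).

Lemma rev_path X (A : enfa X) s t w : epath A t s w -> epath (rev_enfa A) s t (rev w).
Proof.
elim=> [|s' m w' e _ IH|s' m x w' e _ IH].
- exact: p_nil.
- rewrite -[rev w']cats0; apply: (path_cat IH); exact: (p_eps (A := rev_enfa A) (s := m) (m := s') e p_nil).
- rewrite rev_cons -cats1; apply: (path_cat IH).
  exact: (p_step (A := rev_enfa A) (s := m) (m := s') e p_nil).
Qed.

Lemma rev_path2 X (A : enfa X) s t w : epath (rev_enfa A) t s w -> epath A s t (rev w).
Proof.
elim=> [|s' m w' e _ IH|s' m x w' e _ IH].
- exact: p_nil.
- rewrite -[rev w']cats0; apply: (path_cat IH); exact: (p_eps (A := A) (s := m) (m := s') e p_nil).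
- rewrite rev_cons -cats1; apply: (path_cat IH).
  exact: (p_step (A := A) (s := m) (m := s') e p_nil).
Qed.

Lemma reg_rev X (L : language X) : regular L -> regular (lang_rev L).
Proof.
move=> /regular_enfa [A hA].
apply: (regular_ext _ (elang_regular (rev_enfa A))) => w; split.
  case=> s [t [i f /rev_path2 p]]; apply/hA; exists t, s; split=> //.
move/hA=> [s [t [i f /rev_path p]]]; exists t, s; split=> //.
by rewrite revK in p.
Qed.

Lemma reg_full (X : finType) : regular (fun _ : seq X => True).
Proof.
exists unit, tt, (fun _ _ => tt), predT => w; by split.
Qed.

Section Orders.
Variables (H : group) (lt : H -> H -> Prop).
Hypothesis lo : left_order lt.

Lemma lo_irr x : ~ lt x x. Proof. by case: lo. Qed.
Lemma lo_trans x y z : lt x y -> lt y z -> lt x z. Proof. case: lo => _ t _ _; exact: t. Qed.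
Lemma lo_tot x y : x = y \/ lt x y \/ lt y x. Proof. by case: lo. Qed.
Lemma lo_mul g x y : lt x y -> lt (gmul g x) (gmul g y). Proof. case: lo => _ _ _ m; exact: m. Qed.
Lemma lo_asym x y : lt x y -> ~ lt y x.
Proof. by move=> a b; apply: (@lo_irr x); apply: lo_trans a b. Qed.
Lemma lo_mulV g x y : lt (gmul g x) (gmul g y) -> lt x y.
Proof. by move=> /(lo_mul (ginv g)); rewrite !gmulVK. Qed.
Lemma lo_pos_mul a b : lt gone a -> lt gone b -> lt gone (gmul a b).
Proof. move=> ha hb; apply: lo_trans ha _; rewrite -{1}(gmul1r a); exact: lo_mul. Qed.
Lemma lo_neg_inv a : lt a gone -> lt gone (ginv a).
Proof. by move=> /(lo_mul (ginv a)); rewrite gmulVl gmul1r. Qed.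
Lemma lo_pos_inv a : lt gone a -> lt (ginv a) gone.
Proof. by move=> /(lo_mul (ginv a)); rewrite gmulVl gmul1r. Qed.
Lemma lo_neq x y : lt x y -> x <> y.
Proof. by move=> h e; subst; exact: lo_irr h. Qed.

Lemma list_max (Pr : H -> Prop) (s : list H) :
  (exists z, List.In z s /\ Pr z) ->
  exists p, [/\ List.In p s, Pr p & forall y, List.In y s -> Pr y -> y = p \/ lt y p].
Proof.
elim: s => [[z [[] _]]|x s IH] h.
have [[z [zs pz]]|nz] := classic (exists z, List.In z s /\ Pr z).
  have [p [ps pp hp]] := IH (ex_intro _ z (conj zs pz)).
  have [px|npx] := classic (Pr x).
    have [e|[l|l]] := lo_tot x p.
    - exists p; split=> //; first by right. move=> y [<-|ys] py; [by left | exact: hp].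
    - exists p; split=> //; first by right. move=> y [<-|ys] py; [by right | exact: hp].
    - exists x; split=> //; first by left. move=> y [<-|ys] py; first by left.
      right; case: (hp y ys py) => [->//|l']; exact: lo_trans l' l.
  exists p; split=> //; first by right. by move=> y [<-|ys] py; [|exact: hp].
case: h => z [[<-|zs] pz]; last by case: nz; exists z.
exists x; split=> //; first by left. move=> y [<-|ys] py; first by left.
by case: nz; exists y.
Qed.
End Orders.

Section Cone.
Variables (G : group) (P : G -> Prop).
Hypotheses (P1 : ~ P gone) (PM : forall x y, P x -> P y -> P (gmul x y))
  (Ptot : forall x, x = gone \/ P x \/ P (ginv x)).

Definition cone_lt (x y : G) := P (gmul (ginv x) y).

Lemma cone_left_order : left_order cone_lt.
Proof.
split.
- by move=> x; rewrite /cone_lt gmulVl.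
- move=> x y z; rewrite /cone_lt => a b; have := PM a b.
  by rewrite -gmulA gmulKV.
- move=> x y; rewrite /cone_lt; case: (Ptot (gmul (ginv x) y)) => [e|[h|h]].
  + by left; rewrite -(gmulKV x y) e gmul1r.
  + by right; left.
  + by right; right; rewrite ginvM ginvK in h.
- by move=> g x y; rewrite /cone_lt ginvM -gmulA gmulVK.
Qed.

Lemma cone_pos h : positive_cone cone_lt h <-> P h.
Proof. by rewrite /positive_cone /cone_lt ginv1 gmul1l. Qed.
End Cone.

Lemma eval_cat (X : Type) (H : group) (g : X -> H) u v :
  eval_word g (u ++ v) = gmul (eval_word g u) (eval_word g v).
Proof. by elim: u => [|x u IH] /=; rewrite ?gmul1l // IH gmulA. Qed.

Lemma eval_inv_closed (X : Type) (H : group) (g : X -> H) :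
  (forall x, exists w, eval_word g w = ginv (g x)) ->
  forall w, exists w', eval_word g w' = ginv (eval_word g w).
Proof.
move=> hx; elim=> [|x w [w' e]] /=; first by exists [::]; rewrite ginv1.
have [wx ex] := hx x; exists (w' ++ wx); by rewrite eval_cat e ex ginvM.
Qed.

Definition cdec (A : Type) (x y : A) : {x = y} + {x <> y} :=
  excluded_middle_informative (x = y).

Section Wr.
Variables (N Q : group).
Notation W := (wreath N Q).

Definition F (u : W) : Q -> N := proj1_sig u.1.

Lemma weq (u v : W) : (forall z, F u z = F v z) -> u.2 = v.2 -> u = v.
Proof. case: u v => [f a] [g b] /= h e; congr pair => //; exact: dsum_eq. Qed.

Lemma mulF (u v : W) z : F (gmul u v) z = gmul (F u z) (F v (gmul (ginv u.2) z)).
Proof. by []. Qed.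
Lemma mul2 (u v : W) : (gmul u v).2 = gmul u.2 v.2. Proof. by []. Qed.
Lemma invF (u : W) z : F (ginv u) z = ginv (F u (gmul u.2 z)). Proof. by []. Qed.
Lemma inv2 (u : W) : (ginv u).2 = ginv u.2. Proof. by []. Qed.
Lemma oneF z : F (gone : W) z = gone. Proof. by []. Qed.
Lemma one2 : (gone : W).2 = gone. Proof. by []. Qed.

Definition zero : dsum N Q := exist _ _ (@one_supp N Q).

Lemma delta_supp (n : N) : fin_supp (fun z : Q => if cdec z gone then n else gone).
Proof. exists [:: gone] => q nq; case: cdec => // e; case: nq; by left. Qed.

Definition qel (q : Q) : W := (zero, q).
Definition nel (n : N) : W := (exist _ _ (delta_supp n), gone).

Lemma qelF q z : F (qel q) z = gone. Proof. by []. Qed.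
Lemma qel2 q : (qel q).2 = q. Proof. by []. Qed.
Lemma nelF n z : F (nel n) z = if cdec z gone then n else gone. Proof. by []. Qed.
Lemma nel2 n : (nel n).2 = gone. Proof. by []. Qed.

Lemma nelM a b : gmul (nel a) (nel b) = nel (gmul a b).
Proof.
apply: weq => [z|]; last by rewrite mul2 !nel2 gmul1l.
by rewrite mulF !nelF nel2 ginv1 gmul1l; case: (cdec z gone) => e; rewrite ?gmul1l.
Qed.

Lemma qelM a b : gmul (qel a) (qel b) = qel (gmul a b).
Proof. by apply: weq => [z|] //; rewrite mulF !qelF gmul1l. Qed.

Lemma nel1 : nel gone = gone.
Proof. by apply: weq => [z|] //; rewrite nelF oneF; case: cdec. Qed.
Lemma qel1 : qel gone = gone.
Proof. by apply: weq. Qed.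


Variables (ltN : N -> N -> Prop) (ltQ : Q -> Q -> Prop).
Hypotheses (loN : left_order ltN) (loQ : left_order ltQ).

Definition Pw (u : W) : Prop :=
  (exists p, ltN gone (F u p) /\ forall y, ltQ p y -> F u y = gone) \/
  ((forall y, F u y = gone) /\ ltQ gone u.2).

Lemma shiftlt a p y : ltQ (gmul a p) y -> ltQ p (gmul (ginv a) y).
Proof. by move=> /(lo_mul loQ (ginv a)); rewrite gmulVK. Qed.

Lemma Pw1 : ~ Pw gone.
Proof.
case=> [[p [h _]]|[_ h]]; [exact (lo_irr loN h) | exact (lo_irr loQ h)].
Qed.

Lemma PwM u v : Pw u -> Pw v -> Pw (gmul u v).
Proof.
case=> [[p [hp hu]]|[hu ha]]; case=> [[p' [hp' hv]]|[hv hb]].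
- have [e|[l|l]] := lo_tot loQ p (gmul u.2 p').
  + left; exists p; split.
      rewrite mulF e gmulVK -e; exact (lo_pos_mul loN hp hp').
    move=> y ly; rewrite mulF hu // hv ?gmul1l //; apply: shiftlt; by rewrite -e.
  + left; exists (gmul u.2 p'); split.
      by rewrite mulF hu // gmulVK gmul1l.
    move=> y ly; rewrite mulF hu; last exact (lo_trans loQ l ly).
    by rewrite hv ?gmul1l //; apply: shiftlt.
  + left; exists p; split.
      by rewrite mulF (hv (gmul (ginv u.2) p)) ?gmul1r //; apply: shiftlt.
    move=> y ly; rewrite mulF hu // hv ?gmul1l //; apply: shiftlt.
    exact (lo_trans loQ l ly).
- left; exists p; split; first by rewrite mulF hv gmul1r.
  by move=> y ly; rewrite mulF hu // hv gmul1l.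
- left; exists (gmul u.2 p'); split; first by rewrite mulF hu gmul1l gmulVK.
  by move=> y ly; rewrite mulF hu gmul1l hv //; apply: shiftlt.
- right; split; first by move=> y; rewrite mulF hu hv gmul1l.
  rewrite mul2; exact (lo_pos_mul loQ ha hb).
Qed.

Lemma Pw_top (u : W) : (exists z, F u z <> gone) ->
  exists p, F u p <> gone /\ forall y, ltQ p y -> F u y = gone.
Proof.
case: u => [[f [s hs]] a] [z0 hz0] /=; rewrite /F /= in hz0 *.
have zs : List.In z0 s by apply: NNPP => nz; apply: hz0; exact: hs.
have [p [ps pp hp]] := list_max loQ (Pr := fun z => f z <> gone) (ex_intro _ z0 (conj zs hz0)).
exists p; split=> // y ly; apply: NNPP => ny.
have ys : List.In y s by apply: NNPP => nys; apply: ny; exact: hs.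
case: (hp y ys ny) => [e|l]; first by subst; exact (lo_irr loQ ly).
exact (lo_asym loQ l ly).
Qed.

Lemma Pwtot u : u = gone \/ Pw u \/ Pw (ginv u).
Proof.
have [h|h] := classic (forall y, F u y = gone).
  have [e|[l|l]] := lo_tot loQ u.2 gone.
  - by left; apply: weq.
  - right; right; rewrite /Pw; right; split; first by move=> y; rewrite invF h ginv1.
    rewrite inv2; exact (lo_neg_inv loQ l).
  - by right; left; rewrite /Pw; right; split.
have [p [np hp]] := Pw_top (not_all_ex_not _ _ h).
have [e|[l|l]] := lo_tot loN (F u p) gone; first by case: np.
  right; right; rewrite /Pw; left; exists (gmul (ginv u.2) p); split.
    rewrite invF gmulKV; exact (lo_neg_inv loN l).
  move=> y ly; rewrite invF hp ?ginv1 //.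
  by move: ly => /(lo_mul loQ u.2); rewrite gmulKV.
by right; left; rewrite /Pw; left; exists p.
Qed.

Definition peelf (u : W) (p : Q) : Q -> N :=
  fun z => if cdec z gone then gone else F u (gmul p z).

Lemma peel_supp (u : W) p : fin_supp (peelf u p).
Proof.
case: u => [[f [s hs]] a]; exists (List.map (gmul (ginv p)) s) => z nz.
rewrite /peelf; case: cdec => // ?; apply: hs => hin; apply: nz.
rewrite -(gmulVK p z); exact: List.in_map.
Qed.

Definition peel (u : W) p r2 : W := (exist _ _ (peel_supp u p), r2).
Lemma peelF u p r2 z : F (peel u p r2) z = peelf u p z. Proof. by []. Qed.

Lemma peel_eq (u : W) p (v : W) : (forall z, F v z = peelf u p z) ->
  forall z, F (gmul (gmul (qel p) (nel (F u p))) v) z = F u z.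
Proof.
move=> hv z; rewrite !mulF hv mul2 qelF nelF qel2 nel2 gmul1r gmul1l /peelf.
case: (classic (z = p)) => [->|nzp].
  by rewrite gmulVl; case: cdec => [?|[]] //=; rewrite gmul1r.
have ne : gmul (ginv p) z <> gone.
  by move=> e; apply: nzp; rewrite -(gmulKV p z) e gmul1r.
by case: cdec => [e|_] //=; rewrite gmulKV gmul1l.
Qed.

Lemma peel_below (u : W) p : (forall y, ltQ p y -> F u y = gone) ->
  forall z, ~ ltQ z gone -> peelf u p z = gone.
Proof.
move=> hp z nz; rewrite /peelf; case: cdec => // e; apply: hp.
have [e'|[l|l]] := lo_tot loQ z gone; [by [] | by [] |].
by move: l => /(lo_mul loQ p); rewrite gmul1r.
Qed.
End Wr.

Section Lang.
Variables (N Q : group).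
Notation W := (wreath N Q).
Variables (ltN : N -> N -> Prop) (ltQ : Q -> Q -> Prop).
Hypotheses (loN : left_order ltN) (loQ : left_order ltQ).
Variables (XN XQ : finType) (gN : XN -> N) (gQ : XQ -> Q)
  (LN : language XN) (LQ : language XQ).
Hypotheses (sN : forall n, exists w, eval_word gN w = n)
  (sQ : forall q, exists w, eval_word gQ w = q)
  (cN : forall n, ltN gone n <-> exists w, LN w /\ eval_word gN w = n)
  (cQ : forall q, ltQ gone q <-> exists w, LQ w /\ eval_word gQ w = q).

Definition X : finType := (XN + (XQ + XQ))%type.
Definition iN (a : XN) : X := inl a.
Definition iQ (b : XQ) : X := inr (inl b).
Definition iQ' (b : XQ) : X := inr (inr b).

Definition gen (x : X) : W :=
  match x with
  | inl a => nel Q (gN a)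
  | inr (inl b) => qel N (gQ b)
  | inr (inr b) => qel N (ginv (gQ b)) end.

Notation ev := (eval_word gen).

Lemma eval_cons (Y : Type) (H : group) (g : Y -> H) x w :
  eval_word g (x :: w) = gmul (g x) (eval_word g w).
Proof. by []. Qed.

Lemma gen_iN a : gen (iN a) = nel Q (gN a). Proof. by []. Qed.
Lemma gen_iQ b : gen (iQ b) = qel N (gQ b). Proof. by []. Qed.
Lemma gen_iQ' b : gen (iQ' b) = qel N (ginv (gQ b)). Proof. by []. Qed.

Lemma ev_N v : ev (map iN v) = nel Q (eval_word gN v).
Proof.
elim: v => [|x v IH]; first exact: (esym (nel1 _ _)).
by rewrite -[map iN (x :: v)]/(iN x :: map iN v) eval_cons IH gen_iN nelM.
Qed.

Lemma ev_Q w : ev (map iQ w) = qel N (eval_word gQ w).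
Proof.
elim: w => [|x w IH]; first exact: (esym (qel1 _ _)).
by rewrite -[map iQ (x :: w)]/(iQ x :: map iQ w) eval_cons IH gen_iQ qelM.
Qed.

Lemma ev_Q' w : ev (map iQ' w) = qel N (ginv (eval_word gQ (rev w))).
Proof.
elim: w => [|x w IH]; first by rewrite [rev _]/= [eval_word gQ _]/= ginv1 qel1.
rewrite -[map iQ' (x :: w)]/(iQ' x :: map iQ' w) eval_cons IH gen_iQ' qelM.
by rewrite rev_cons -cats1 eval_cat eval_cons [eval_word _ [::]]/= gmul1r ginvM.
Qed.

Definition full (Y : finType) : language Y := fun _ => True.
Definition A1 := rename_lang iQ (@full XQ).
Definition A2 := rename_lang iN LN.
Definition T := rename_lang iQ' (lang_rev LQ).
Definition M := rename_lang iN (@full XN).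
Definition R := lang_star (lang_concat T M).
Definition L1 := lang_concat (lang_concat (lang_concat A1 A2) R) A1.
Definition L2 := rename_lang iQ LQ.
Definition Lw := lang_union L1 L2.

Lemma renP (Y Z : finType) (phi : Y -> Z) (L : language Y) v :
  rename_lang phi L v <-> exists w, L w /\ v = map phi w.
Proof.
by split; case=> w [h ->]; exists w; rewrite flatten_map1.
Qed.

Lemma R_sound r : R r -> forall z, ~ ltQ z gone -> F (ev r) z = gone.
Proof.
case=> ws [hws ->]; elim: ws hws => [|u ws IH] hws /= z nz; first by [].
have [t [m [/renP [t' [ht' ->]] /renP [m' [_ ->]] eu]]] := hws u (mem_head _ _).
rewrite eval_cat eu eval_cat ev_Q' ev_N.
set s := ginv (eval_word gQ (rev t')).
have sneg : ltQ s gone.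
  apply: (lo_pos_inv loQ); apply/cQ; by exists (rev t').
have IH' := IH (fun u' hu => hws u' (introT orP (Logic.or_intror hu))).
rewrite mulF mulF qelF mul2 qel2 nel2 gmul1l gmul1r.
have ne : gmul (ginv s) z <> gone.
  move=> e; apply: nz; have -> : z = s by rewrite -(gmulKV s z) e gmul1r.
  exact: sneg.
have pos : ltQ gone (gmul (ginv s) z).
  have sp := lo_neg_inv loQ sneg.
  have [e|[l|l]] := lo_tot loQ z gone; first by rewrite e gmul1r.
    by [].
  apply: (lo_trans loQ sp); rewrite -{1}(gmul1r (ginv s)); exact: (lo_mul loQ).
rewrite IH'; last exact: (lo_asym loQ pos).
by rewrite gmul1r nelF; case: (cdec (gmul (ginv s) z) gone) => [/ne []|?].
Qed.


Lemma eval_one (Y : Type) (H : group) (g : Y -> H) x : eval_word g [:: x] = g x.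
Proof. exact: gmul1r. Qed.

Lemma supp_list (u : W) : exists s, forall z, ~ List.In z s -> F u z = gone.
Proof. by case: u => [[f [s hs]] a]; exists s. Qed.

Lemma R_complete n : forall (s : list Q) (h : W), (List.length s <= n)%coq_nat ->
  (forall z, ~ List.In z s -> F h z = gone) -> (forall z, ~ ltQ z gone -> F h z = gone) ->
  exists r, R r /\ forall z, F (ev r) z = F h z.
Proof.
elim: n => [|n IH] s h hl hs hb;
  (have [hz|hz] := classic (forall z, F h z = gone);
   [by exists [::]; split; [exists [::] | move=> z; rewrite hz] | ]).
  case: s hl hs => [_ hs|? ? hl _]; first by case: hz => z; exact: (hs z id).
  by simpl in hl; lia.
have [p [np hp]] := Pw_top loQ (not_all_ex_not _ _ hz).
have pneg : ltQ p gone by apply: NNPP => np'; apply: np; exact: hb.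
have pin : List.In p s by apply: NNPP => np'; apply: np; exact: hs.
pose s' := List.map (gmul (ginv p)) (List.remove (@cdec Q) p s).
have [|||r' [Rr' hr']] := IH s' (peel h p gone).
- rewrite /s' List.length_map; have := List.remove_length_lt (@cdec Q) s p pin; lia.
- move=> z nzs; rewrite peelF /peelf; case: cdec => // nz1.
  apply: NNPP => nf; apply: nzs.
  have ins : List.In (gmul p z) s by apply: NNPP => ni; apply: nf; exact: hs.
  have pzp : gmul p z <> p.
    by move=> e; apply nz1; rewrite -(gmulVK p z) e gmulVl.
  rewrite -(gmulVK p z); apply: List.in_map; exact: List.in_in_remove.
- exact: (peel_below loQ hp).
have [w0 [Lw0 Ew0]] := (cQ (ginv p)).1 (lo_neg_inv loQ pneg).
have [m0 Em0] := sN (F h p).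
exists ((map iQ' (rev w0) ++ map iN m0) ++ r'); split.
  case: Rr' => ws [hws ->]; exists ((map iQ' (rev w0) ++ map iN m0) :: ws); split; last by [].
  move=> u; rewrite inE => /orP [/eqP ->|hu]; last exact: hws.
  exists (map iQ' (rev w0)), (map iN m0); split=> //; apply/renP.
    by exists (rev w0); split=> //; rewrite /lang_rev revK.
  by exists m0.
move=> z; rewrite eval_cat eval_cat ev_Q' ev_N revK Ew0 ginvK Em0.
by apply: peel_eq => z'; rewrite hr' peelF.
Qed.

Lemma L_complete u : Pw ltN ltQ u -> exists w, Lw w /\ ev w = u.
Proof.
case=> [[p [hp htop]]|[hu hq]]; last first.
  have [w' [Lw' Ew']] := (cQ u.2).1 hq.
  exists (map iQ w'); split; first by right; apply/renP; exists w'.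
  rewrite ev_Q; apply: weq => [z|]; first by rewrite qelF hu.
  by rewrite qel2.
have [a' Ea] := sQ p.
have [n' [Ln En]] := (cN (F u p)).1 hp.
have [s hs] := supp_list u.
have [||r [Rr hr]] := R_complete (s := List.map (gmul (ginv p)) s) (h := peel u p gone) (le_n _).
- move=> z nzs; rewrite peelF /peelf; case: cdec => // nz1.
  apply: NNPP => nf; apply: nzs; rewrite -(gmulVK p z); apply: List.in_map.
  by apply: NNPP => ni; apply: nf; exact: hs.
- exact: (peel_below loQ htop).
have [b' Eb] := sQ (gmul (ginv (gmul (gmul p gone) (ev r).2)) u.2).
exists (((map iQ a' ++ map iN n') ++ r) ++ map iQ b'); split.
  left; exists ((map iQ a' ++ map iN n') ++ r), (map iQ b'); split=> //; last first.
    by apply/renP; exists b'.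
  exists (map iQ a' ++ map iN n'), r; split=> //.
  by exists (map iQ a'), (map iN n'); split=> //; apply/renP; [exists a' | exists n'].
rewrite !eval_cat !ev_Q ev_N Ea En Eb; apply: weq => [z|].
  rewrite mulF qelF gmul1r; apply: peel_eq => z'; by rewrite hr peelF.
by rewrite !mul2 qel2 nel2 gmulKV.
Qed.

Lemma L_sound w : Lw w -> Pw ltN ltQ (ev w).
Proof.
case=> [[w1 [b [[w2 [r [[a [n [/renP [a' [_ ->]] /renP [n' [Ln ->]] ->]]] Rr ->]]] /renP [b' [_ ->]] ->]]] | /renP [w' [Lw' ->]]]; last first.
  rewrite ev_Q; right; split=> [y|]; first by rewrite qelF.
  by rewrite qel2; apply/cQ; exists w'.
rewrite !eval_cat !ev_Q ev_N; left; exists (eval_word gQ a'); split.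
  rewrite mulF qelF gmul1r mulF mulF qelF nelF !mul2 qel2 nel2 !gmul1r gmul1l gmulVl.
  rewrite (R_sound Rr (lo_irr loQ (x := gone))) gmul1r.
  by case: cdec => [_|[]] //=; apply/cN; exists n'.
move=> y ly; rewrite mulF qelF gmul1r mulF mulF qelF nelF !mul2 qel2 nel2 !gmul1r gmul1l.
have pos : ltQ gone (gmul (ginv (eval_word gQ a')) y).
  by apply: (shiftlt loQ); rewrite gmul1r.
rewrite (R_sound Rr (lo_asym loQ pos)) gmul1r.
by case: cdec => // /esym /(lo_neq loQ pos) [].
Qed.

Lemma gen_inv x : exists w, ev w = ginv (gen x).
Proof.
case: x => [a|[b|b]].
- have [v Ev] := sN (ginv (gN a)); exists (map iN v); rewrite ev_N Ev.
  change (gen (inl a)) with (nel Q (gN a)).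
  apply: weq => [z|]; last by rewrite inv2 !nel2 ginv1.
  rewrite nelF invF nel2 gmul1l nelF; case: cdec => // ?; by rewrite ginv1.
- exists [:: iQ' b]; rewrite eval_one gen_iQ'.
  change (gen (inr (inl b))) with (qel N (gQ b)).
  by apply: weq => [z|] //; rewrite invF !qelF ginv1.
- exists [:: iQ b]; rewrite eval_one gen_iQ.
  change (gen (inr (inr b))) with (qel N (ginv (gQ b))).
  apply: weq => [z|]; first by rewrite invF !qelF ginv1.
  by rewrite inv2 !qel2 ginvK.
Qed.

Lemma gen_surj u : exists w, ev w = u.
Proof.
case: (Pwtot loN loQ u) => [->|[hu|hu]]; first by exists [::].
  by have [w [_ e]] := L_complete hu; exists w.
have [w [_ e]] := L_complete hu.
have [w' e'] := eval_inv_closed gen_inv w.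
by exists w'; rewrite e' e ginvK.
Qed.

Lemma wreath_cone u : positive_cone (cone_lt (Pw ltN ltQ)) u <-> exists w, Lw w /\ ev w = u.
Proof.
rewrite cone_pos; split; first exact: L_complete.
by case=> w [h <-]; exact: L_sound.
Qed.

Lemma wreath_order : left_order (cone_lt (Pw ltN ltQ)).
Proof.
apply: cone_left_order; [exact: Pw1 loN loQ | exact: PwM loN loQ | exact: Pwtot loN loQ].
Qed.
End Lang.

Lemma core (C : lang_class)
  (hren : forall (X Y : finType) (phi : X -> Y) L, C X L -> C Y (rename_lang phi L))
  (hrev : closed_under_reversal C)
  (hun : forall (X : finType) (L1 L2 : language X), C X L1 -> C X L2 -> C X (lang_union L1 L2))
  (hcat : forall (X : finType) (L1 L2 : language X), C X L1 -> C X L2 -> C X (lang_concat L1 L2))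
  (hstar : forall (X : finType) (L : language X), C X L -> C X (lang_star L))
  (hfull : forall X : finType, C X (fun _ => True))
  (N Q : group) :
  admits_C_left_order C N -> admits_C_left_order C Q -> admits_C_left_order C (wreath N Q).
Proof.
case=> ltN [loN [XN [gN [LN [CN sN cN]]]]]; case=> ltQ [loQ [XQ [gQ [LQ [CQ sQ cQ]]]]].
exists (cone_lt (Pw ltN ltQ)); split; first exact: wreath_order loN loQ.
exists (X XN XQ), (gen gN gQ), (Lw LN LQ); split.
- rewrite /Lw /L1 /L2 /A1 /A2 /R /T /M.
  apply hun; last by apply hren.
  apply hcat; last by apply hren; apply hfull.
  apply hcat; last by apply hstar; apply hcat; apply hren; [apply hrev | apply hfull].
  by apply hcat; apply hren; [apply hfull|].
- move=> u; exact: (gen_surj loN loQ sN sQ cN cQ u).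
- move=> u; exact: (wreath_cone loQ sN sQ cN cQ u).
Qed.

Lemma flatten_nil (Y Z : Type) (w : seq Y) : flatten (map (fun _ => [::] : seq Z) w) = [::].
Proof. by elim: w. Qed.

Theorem proposition3p20 :
  (forall C : lang_class,
     full_AFL C -> closed_under_reversal C ->
     forall N Q : group,
       finitely_generated N -> finitely_generated Q ->
       admits_C_left_order C N -> admits_C_left_order C Q ->
       admits_C_left_order C (wreath N Q))
  /\
  (forall N Q : group,
     finitely_generated N -> finitely_generated Q ->
     admits_C_left_order regular N -> admits_C_left_order regular Q ->
     admits_C_left_order regular (wreath N Q)).
Proof.
split.
  move=> C [himg [hpre [_ [hun [hcat hstar]]]]] hrev N Q _ _ aN aQ.
  have hfull : forall Y : finType, C Y (fun _ => True).
    case: aN => _ [_ [XN [_ [LN [CN _ _]]]]] Y.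
    pose L0 := hom_image (fun _ : XN => [::] : seq Y) LN.
    have C0 : C Y (hom_preimage (fun _ : Y => [::] : seq Y) (lang_star L0)).
      by apply: hpre; apply: hstar; apply: himg.
    suff -> : (fun _ : seq Y => True) = hom_preimage (fun _ : Y => [::] : seq Y) (lang_star L0) by [].
    apply: functional_extensionality => w; apply: propositional_extensionality; split=> // _.
    by rewrite /hom_preimage flatten_nil; exists [::].
  apply: core => //.
  move=> X Y phi L; exact: himg.
move=> N Q _ _; apply: core.
- move=> X Y phi L; exact: reg_rename.
- move=> X L; exact: reg_rev.
- exact: reg_union.
- exact: reg_concat.
- exact: reg_star.
- exact: reg_full.
Qed.
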